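(* For every nonnegative integer $n$, $$\sum_{k=0}^{\infty}(-1)^k(4k+1)\,\frac{(-3n)_k\,(-2n+\tfrac16)_k\,(\tfrac12)_k}{k!\,(2n+\tfrac43)_k\,(3n+\tfrac32)_k}=\left(\frac{2^2 3^3}{5^5}\right)^n\frac{(\tfrac56)_n(\tfrac12)_n(\tfrac76)_n^2}{(\tfrac{7}{15})_n(\tfrac{13}{15})_n(\tfrac{16}{15})_n(\tfrac{4}{15})_n}.$$ (The sum is finite, since $(-3n)_k=0$ for $k>3n$.)
   Context: $(a)_j=\Gamma(a+j)/\Gamma(a)=a(a+1)\cdots(a+j-1)$ denotes the rising factorial (Pochhammer symbol), with $(a)_0=1$. *)

(* Defs.v *)
From HB Require Import structures.
From mathcomp Require Import all_boot all_order all_algebra.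
Set Implicit Arguments. Unset Strict Implicit. Unset Printing Implicit Defensive.
Import Order.TTheory GRing.Theory Num.Theory.
Local Open Scope ring_scope.

Definition poch (R : nzRingType) (a : R) (j : nat) : R :=
  \prod_(i < j) (a + i%:R).

Definition term7 (n k : nat) : rat :=
  (-1) ^+ k * (4 * k%:R + 1)
  * (poch (- (3 * n)%:R) k * poch (- (2 * n)%:R + 1/6) k * poch (1/2) k)
  / ((k`!)%:R * poch ((2 * n)%:R + 4/3) k * poch ((3 * n)%:R + 3/2) k).

(* Main.v *)
Require Import Defs.
From Stdlib Require Import ZArith Lia Ring Field.
From HB Require Import structures.
From mathcomp Require Import all_boot all_order all_algebra.
Import Order.TTheory GRing.Theory Num.Theory.
Local Open Scope ring_scope.
Definition phiZ (z : Z) : rat :=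
  match z with
  | Z0 => 0
  | Zpos p => (Pos.to_nat p)%:R
  | Zneg p => - (Pos.to_nat p)%:R
  end.

Lemma phiZE z : phiZ z = (Z.to_nat z)%:R - (Z.to_nat (- z))%:R.
Proof. by case: z => [|p|p] /=; rewrite ?subr0 ?sub0r. Qed.

Definition r0 : rat := 0.
Definition r1 : rat := 1.
Definition radd (x y : rat) : rat := x + y.
Definition rmul (x y : rat) : rat := x * y.
Definition rsub (x y : rat) : rat := x - y.
Definition ropp (x : rat) : rat := - x.
Definition rinv (x : rat) : rat := x^-1.
Definition rdiv (x y : rat) : rat := x / y.
Definition rnat (n : nat) : rat := n%:R.
Definition rexp (x : rat) (n : nat) : rat := x ^+ n.

Lemma rat_rth : @ring_theory rat r0 r1 radd rmul rsub ropp (@eq rat).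
Proof.
constructor; rewrite /r0 /r1 /radd /rmul /rsub /ropp.
- exact: add0r. - exact: addrC. - exact: addrA. - exact: mul1r.
- exact: mulrC. - exact: mulrA. - exact: mulrDl. - by []. - exact: subrr.
Qed.

Lemma natZ_add (a b c d : nat) : Nat.add a d = Nat.add c b -> (a%:R - b%:R = c%:R - d%:R :> rat).
Proof. move=> h; apply/eqP; rewrite subr_eq addrAC eq_sym subr_eq -!natrD.
by rewrite -!plusE h. Qed.

Lemma phiZ_add x y : phiZ (x + y) = phiZ x + phiZ y.
Proof.
rewrite !phiZE addrACA -opprD -!natrD; apply: natZ_add.
rewrite -!plusE; lia.
Qed.

Lemma phiZ_opp x : phiZ (- x) = - phiZ x.
Proof. by rewrite !phiZE opprB Z.opp_involutive. Qed.

Lemma phiZ_mul x y : phiZ (x * y) = phiZ x * phiZ y.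
Proof.
by case: x => [|p|p]; case: y => [|q|q] //=;
  rewrite ?mul0r ?mulr0 ?Pos2Nat.inj_mul ?natrM ?mulrN ?mulNr ?opprK.
Qed.

Lemma phiZ_sub x y : phiZ (x - y) = phiZ x - phiZ y.
Proof. by rewrite /Z.sub phiZ_add phiZ_opp. Qed.

Lemma phiZ_eq x y : Zeq_bool x y = true -> phiZ x = phiZ y.
Proof. by move/Zeq_bool_eq => ->. Qed.

Lemma rat_morph : @ring_morph rat r0 r1 radd rmul rsub ropp (@eq rat) Z
  Z0 (Zpos xH) Z.add Z.mul Z.sub Z.opp Zeq_bool phiZ.
Proof.
constructor => //.
- exact: phiZ_add. - exact: phiZ_sub. - exact: phiZ_mul. - exact: phiZ_opp.
- exact: phiZ_eq.
Qed.

Lemma rat_fth : @field_theory rat r0 r1 radd rmul rsub ropp rdiv rinv (@eq rat).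
Proof.
constructor.
- exact: rat_rth.
- by [].
- by [].
- by move=> p hp; rewrite /rmul /rinv mulVf //; apply/eqP.
Qed.

Ltac ratcst t :=
  match t with
  | rnat ?n =>
      match isnatcst n with true => constr:(Z.of_nat n) | _ => constr:(InitialRing.NotConstant) end
  | phiZ ?c => constr:(c)
  | r0 => constr:(Z0)
  | r1 => constr:(Zpos xH)
  | _ => constr:(InitialRing.NotConstant)
  end.

Lemma phiZ_inj c1 c2 : phiZ c1 = phiZ c2 -> Zeq_bool c1 c2 = true.
Proof.
move=> h; apply/Zeq_is_eq_bool.
have: (Z.to_nat c1 + Z.to_nat (- c2) = Z.to_nat c2 + Z.to_nat (- c1))%coq_nat.
  apply/eqP; rewrite plusE -(eqr_nat rat) !natrD.
  move: h; rewrite !phiZE => /eqP; rewrite subr_eq addrAC eq_sym subr_eq.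
  by move/eqP->.
lia.
Qed.



Lemma rat_fth2 : @field_theory (GRing.PzSemiRing.sort rat_rat__canonical__GRing_PzSemiRing) r0 r1 (fun x y => x + y) (fun x y => x * y)
  (fun x y => x - y) (fun x => - x) (fun x y => x / y) (fun x => x^-1) (@eq _).
Proof. exact: rat_fth. Qed.
Lemma rat_morph2 : @ring_morph (GRing.PzSemiRing.sort rat_rat__canonical__GRing_PzSemiRing) r0 r1 (fun x y => x + y) (fun x y => x * y)
  (fun x y => x - y) (fun x => - x) (@eq _) _
  Z0 (Zpos xH) Z.add Z.mul Z.sub Z.opp Zeq_bool phiZ.
Proof. exact: rat_morph. Qed.
Add Field ratfield : rat_fth (morphism rat_morph, constants [ratcst], completeness phiZ_inj).

Ltac canon t :=
  lazymatch t with
  | @GRing.add _ ?a ?b => let a' := canon a in let b' := canon b in constr:(radd a' b')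
  | @GRing.opp _ ?a => let a' := canon a in constr:(ropp a')
  | @GRing.mul _ ?a ?b => let a' := canon a in let b' := canon b in constr:(rmul a' b')
  | @GRing.inv _ ?a => let a' := canon a in constr:(rinv a')
  | @GRing.exp _ ?a ?n => let a' := canon a in constr:(rexp a' n)
  | @Algebra.natmul _ (GRing.one _) ?n => constr:(rnat n)
  | @poch _ ?a ?k => let a' := canon a in constr:(@poch rat_rat__canonical__GRing_NzRing a' k)
  | @GRing.zero _ => constr:(r0)
  | @GRing.one _ => constr:(r1)
  | _ => t
  end.

Ltac canon_goal := match goal with |- @eq _ ?a ?b =>
  let a' := canon a in let b' := canon b in change (@eq rat a' b') end.
Ltac rring := canon_goal; ring.
Ltac rfield := canon_goal; field.

Definition Yp (x z : rat) : rat :=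
  (((phiZ (1151882200)) + x * ((phiZ (24324874280)) + x * ((phiZ (230105741538)) + x * ((phiZ (1290988477314)) + x * ((phiZ (4789279969848)) + x * ((phiZ (12387313057392)) + x * ((phiZ (22921918259904)) + x * ((phiZ (30595073399064)) + x * ((phiZ (29251724482944)) + x * ((phiZ (19547598595968)) + x * ((phiZ (8670816885888)) + x * ((phiZ (2293338448512)) + x * (phiZ (273639679488)))))))))))))) + z * (((phiZ (251001030)) + x * ((phiZ (4118850141)) + x * ((phiZ (30096835191)) + x * ((phiZ (128655436266)) + x * ((phiZ (355746936852)) + x * ((phiZ (664188216120)) + x * ((phiZ (847370780136)) + x * ((phiZ (729100730304)) + x * ((phiZ (404775278784)) + x * ((phiZ (130899193344)) + x * (phiZ (18721839744)))))))))))) + z * (((phiZ (-450839445)) + x * ((phiZ (-7635895869)) + x * ((phiZ (-57097803537)) + x * ((phiZ (-248253046074)) + x * ((phiZ (-695068021404)) + x * ((phiZ (-1309525320384)) + x * ((phiZ (-1681403624640)) + x * ((phiZ (-1452893244192)) + x * ((phiZ (-808642305216)) + x * ((phiZ (-261798386688)) + x * (phiZ (-37443679488)))))))))))) + z * (((phiZ (-199451070)) + x * ((phiZ (-2365710984)) + x * ((phiZ (-12245591610)) + x * ((phiZ (-35988175584)) + x * ((phiZ (-65464833744)) + x * ((phiZ (-75281625504)) + x * ((phiZ (-53325918432)) + x * ((phiZ (-21232865664)) + x * (phiZ (-3633009408)))))))))) + z * (((phiZ (173632725)) + x * ((phiZ (2159055360)) + x * ((phiZ (11557752408)) + x * ((phiZ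 (34773679080)) + x * ((phiZ (64272271392)) + x * ((phiZ (74667515904)) + x * ((phiZ (53196797952)) + x * ((phiZ (21232865664)) + x * (phiZ (3633009408)))))))))) + z * (((phiZ (60963840)) + x * ((phiZ (491058288)) + x * ((phiZ (1642192056)) + x * ((phiZ (2908325088)) + x * ((phiZ (2860386048)) + x * ((phiZ (1473863040)) + x * (phiZ (309889152)))))))) + z * (((phiZ (-37308600)) + x * ((phiZ (-310988160)) + x * ((phiZ (-1066054608)) + x * ((phiZ (-1917328320)) + x * ((phiZ (-1901045376)) + x * ((phiZ (-982575360)) + x * (phiZ (-206592768)))))))) + z * (((phiZ (-5715360)) + x * ((phiZ (-28086912)) + x * ((phiZ (-49268736)) + x * ((phiZ (-36951552)) + x * (phiZ (-10077696)))))) + z * ((phiZ (2857680)) + x * ((phiZ (14043456)) + x * ((phiZ (24634368)) + x * ((phiZ (18475776)) + x * (phiZ (5038848)))))))))))))).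

Definition Cnp (x : rat) : rat := (-3*x-3)*(-3*x-2)*(-3*x-1)*(-2*x-11/6)*(-2*x-5/6).
Definition P1p (x : rat) : rat := (15*x+7)*(15*x+13)*(15*x+16)*(15*x+4)*Cnp x.
Definition P0p (x : rat) : rat := 8748/5*(x+5/6)*(x+1/2)*(x+7/6)*(x+7/6).
Definition c1p (x : rat) : rat := (2*x+4/3)*(2*x+7/3)*(3*x+3/2)*(3*x+5/2)*(3*x+7/2).
Definition Qp (x z : rat) : rat := (z-3*x-3)*(z-3*x-2)*(z-3*x-1)*(z-2*x-11/6)*(z-2*x-5/6)
  *(z+2*x+4/3)*(z+2*x+7/3)*(z+3*x+3/2)*(z+3*x+5/2)*(z+3*x+7/2).

Lemma key (x z w : rat) :
  1440 * (P1p x * ((4*z+1) * c1p x * w) - P0p x * ((4*z+1) * w * Qp x z)) =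
  - w * ((z-3*x-3)*(z-2*x-11/6)*(z+1/2)) * Yp x (z+1)
  - w * (z*(z+2*x+7/3)*(z+3*x+7/2)) * Yp x z.
Proof.
rewrite /P1p /Cnp /P0p /c1p /Qp /Yp.
Time rfield.
Qed.

Lemma natS (n : nat) : (n.+1)%:R = n%:R + 1 :> rat.
Proof. by rewrite -natr1. Qed.

Lemma poch0 (a : rat) : poch a 0 = 1.
Proof. by rewrite /poch big_ord0. Qed.

Lemma pochS (a : rat) k : poch a k.+1 = poch a k * (a + k%:R).
Proof. by rewrite /poch big_ord_recr. Qed.

Lemma pochD (a : rat) m k : poch a (m + k) = poch a m * poch (a + m%:R) k.
Proof.
elim: k => [|k IH]; first by rewrite addn0 poch0 mulr1.
by rewrite addnS !pochS IH natrD addrA mulrA.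
Qed.

Lemma pochC (a : rat) m k : poch a m != 0 ->
  poch (a + m%:R) k = poch a k * poch (a + k%:R) m / poch a m.
Proof.
move=> h; rewrite -pochD addnC pochD [_ * _ / _]mulrC mulKf //.
Qed.

Lemma poch_gt0 (a : rat) k : 0 < a -> 0 < poch a k.
Proof.
move=> ha; apply: prodr_gt0 => i _; apply: (lt_le_trans ha).
by rewrite lerDl ler0n.
Qed.

Lemma poch_zero (a : rat) m k : a + m%:R = 0 -> (m < k)%N -> poch a k = 0.
Proof. by move=> h hk; rewrite -(subnKC hk) pochD pochS h mulr0 mul0r. Qed.

Lemma lin_gt0 (c d : rat) (n : nat) : 0 <= c -> 0 < d -> 0 < c * n%:R + d.
Proof. move=> hc hd; apply: ltr_wpDl => //; exact: mulr_ge0 hc (ler0n _ _). Qed.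

Lemma term7_zero n k : (3 * n < k)%N -> term7 n k = 0.
Proof.
move=> hk; rewrite /term7 (@poch_zero _ (3 * n)) ?addNr //.
by rewrite !mul0r mulr0 mul0r.
Qed.

Lemma sum_stable n N : (3 * n < N)%N ->
  \sum_(k < N) term7 n k = \sum_(k < (3 * n).+1) term7 n k.
Proof.
elim: N => [//|N IH] hN.
case: (ltngtP (3 * n) N) => h.
- by rewrite big_ord_recr /= IH // term7_zero // addr0.
- by move: hN; rewrite ltnS leqNgt h.
- by rewrite h.
Qed.

Lemma poch2 (a : rat) : poch a 2 = a * (a + 1).
Proof. by rewrite !pochS poch0 mul1r addr0. Qed.
Lemma poch3 (a : rat) : poch a 3 = a * (a + 1) * (a + 2%:R).
Proof. by rewrite !pochS poch0 mul1r addr0. Qed.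

Lemma poch_neq0 (a : rat) k : 0 < a -> poch a k != 0.
Proof. by move=> h; rewrite gt_eqF // poch_gt0. Qed.

Lemma pos_neq0 (e : rat) : 0 < e -> e <> r0.
Proof. by move=> h he; move: h; rewrite he ltxx. Qed.
Lemma neg_neq0 (e : rat) : e < 0 -> e <> r0.
Proof. by move=> h he; move: h; rewrite he ltxx. Qed.
Lemma pos_add_l (a b : rat) : 0 < a -> 0 <= b -> 0 < radd a b.
Proof. by move=> ha hb; rewrite /radd ltr_wpDr. Qed.
Lemma pos_add_r (a b : rat) : 0 <= a -> 0 < b -> 0 < radd a b.
Proof. by move=> ha hb; rewrite /radd ltr_wpDl. Qed.
Lemma pos_mul (a b : rat) : 0 < a -> 0 < b -> 0 < rmul a b.
Proof. by move=> ha hb; rewrite /rmul mulr_gt0. Qed.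
Lemma pos_inv (a : rat) : 0 < a -> 0 < rinv a.
Proof. by move=> ha; rewrite /rinv invr_gt0. Qed.
Lemma pos_phiZ p : 0 < phiZ (Zpos p).
Proof. by rewrite /= ltr0n; apply/ssrnat.ltP; apply: Pos2Nat.is_pos. Qed.
Lemma pos_natS n : 0 < rnat n.+1.
Proof. by rewrite /rnat ltr0n. Qed.
Lemma pos_fact n : 0 < rnat n`!.
Proof. by rewrite /rnat ltr0n fact_gt0. Qed.
Lemma pos_r1 : 0 < r1.
Proof. by rewrite /r1 ltr01. Qed.
Lemma pos_poch (a : rat) k : 0 < a -> 0 < poch a k.
Proof. exact: poch_gt0. Qed.
Lemma nn_pos (a : rat) : 0 < a -> 0 <= a.
Proof. exact: ltW. Qed.
Lemma nn_add (a b : rat) : 0 <= a -> 0 <= b -> 0 <= radd a b.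
Proof. by move=> ha hb; rewrite /radd addr_ge0. Qed.
Lemma nn_mul (a b : rat) : 0 <= a -> 0 <= b -> 0 <= rmul a b.
Proof. by move=> ha hb; rewrite /rmul mulr_ge0. Qed.
Lemma nn_nat n : 0 <= rnat n.
Proof. exact: ler0n. Qed.
Lemma neg_phiZ p : phiZ (Zneg p) < 0.
Proof. by rewrite oppr_lt0 ltr0n; apply/ssrnat.ltP; apply: Pos2Nat.is_pos. Qed.
Lemma neg_add_l (a b : rat) : a < 0 -> b <= 0 -> radd a b < 0.
Proof. by move=> ha hb; rewrite /radd -oppr_gt0 opprD ltr_wpDr // ?oppr_ge0 ?oppr_gt0. Qed.
Lemma neg_add_r (a b : rat) : a <= 0 -> b < 0 -> radd a b < 0.
Proof. by move=> ha hb; rewrite /radd -oppr_gt0 opprD ltr_wpDl // ?oppr_ge0 ?oppr_gt0. Qed.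
Lemma neg_mul_l (a b : rat) : a < 0 -> 0 < b -> rmul a b < 0.
Proof. by move=> ha hb; rewrite /rmul pmulr_llt0. Qed.
Lemma neg_mul_r (a b : rat) : 0 < a -> b < 0 -> rmul a b < 0.
Proof. by move=> ha hb; rewrite /rmul pmulr_rlt0. Qed.
Lemma np_neg (a : rat) : a < 0 -> a <= 0.
Proof. exact: ltW. Qed.
Lemma np_mul_l (a b : rat) : a <= 0 -> 0 <= b -> rmul a b <= 0.
Proof. by move=> ha hb; rewrite /rmul mulr_le0_ge0. Qed.
Lemma np_mul_r (a b : rat) : 0 <= a -> b <= 0 -> rmul a b <= 0.
Proof. by move=> ha hb; rewrite /rmul mulr_ge0_le0. Qed.
Lemma np_add (a b : rat) : a <= 0 -> b <= 0 -> radd a b <= 0.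
Proof. by move=> ha hb; rewrite /radd -oppr_ge0 opprD addr_ge0 // oppr_ge0. Qed.

Lemma neg_sub (a b : rat) : a <= 0 -> 0 < b -> rsub a b < 0.
Proof. move=> ha hb; rewrite /rsub; apply: (@neg_add_r a (- b) ha); by rewrite oppr_lt0. Qed.
Lemma neg_neq0' (e : rat) : e < 0 -> e = phiZ 0 -> False.
Proof. by move=> h he; move: h; rewrite he ltxx. Qed.
Lemma pos_neq0' (e : rat) : 0 < e -> e = phiZ 0 -> False.
Proof. by move=> h he; move: h; rewrite he ltxx. Qed.
Lemma pos_mul_neg (a b : rat) : a < 0 -> b < 0 -> 0 < rmul a b.
Proof. by move=> ha hb; rewrite /rmul nmulr_rgt0. Qed.
Lemma pos_opp (a : rat) : a < 0 -> 0 < ropp a.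
Proof. by rewrite /ropp oppr_gt0. Qed.
Lemma neg_opp (a : rat) : 0 < a -> ropp a < 0.
Proof. by rewrite /ropp oppr_lt0. Qed.
Lemma nn_opp (a : rat) : a <= 0 -> 0 <= ropp a.
Proof. by rewrite /ropp oppr_ge0. Qed.
Lemma np_opp (a : rat) : 0 <= a -> ropp a <= 0.
Proof. by rewrite /ropp oppr_le0. Qed.

Ltac solve_pos :=
  lazymatch goal with
  | |- is_true (0 < phiZ (Zpos _)) => apply: pos_phiZ
  | |- is_true (0 < rnat (_ `!)) => apply: pos_fact
  | |- is_true (0 < rnat (S _)) => apply: pos_natS
  | |- is_true (0 < r1) => apply: pos_r1
  | |- is_true (0 < rmul _ _) =>
      first [ apply: pos_mul; solve_pos | apply: pos_mul_neg; solve_neg ]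
  | |- is_true (0 < rinv _) => apply: pos_inv; solve_pos
  | |- is_true (0 < poch _ _) => apply: pos_poch; solve_pos
  | |- is_true (0 < ropp _) => apply: pos_opp; solve_neg
  | |- is_true (0 < radd _ _) =>
      first [ apply: pos_add_l; [solve_pos | solve_nn]
            | apply: pos_add_r; [solve_nn | solve_pos] ]
  end
with solve_nn :=
  lazymatch goal with
  | |- is_true (0 <= rnat _) => apply: nn_nat
  | |- is_true (0 <= ropp _) => apply: nn_opp; solve_np
  | |- is_true (0 <= rmul _ _) => apply: nn_mul; solve_nn
  | |- is_true (0 <= radd _ _) => apply: nn_add; solve_nn
  | |- _ => apply: nn_pos; solve_pos
  end
with solve_neg :=
  lazymatch goal with
  | |- is_true (phiZ (Zneg _) < 0) => apply: neg_phiZ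
  | |- is_true (ropp _ < 0) => apply: neg_opp; solve_pos
  | |- is_true (rmul _ _ < 0) =>
      first [ apply: neg_mul_l; [solve_neg | solve_pos]
            | apply: neg_mul_r; [solve_pos | solve_neg] ]
  | |- is_true (rsub _ _ < 0) => apply: neg_sub; [solve_np | solve_pos]
  | |- is_true (radd _ _ < 0) =>
      first [ apply: neg_add_l; [solve_neg | solve_np]
            | apply: neg_add_r; [solve_np | solve_neg] ]
  end
with solve_np :=
  lazymatch goal with
  | |- is_true (rmul _ _ <= 0) =>
      first [ apply: np_mul_l; [solve_np | solve_nn]
            | apply: np_mul_r; [solve_nn | solve_np] ]
  | |- is_true (radd _ _ <= 0) => apply: np_add; solve_np
  | |- is_true (ropp _ <= 0) => apply: np_opp; solve_nn
  | |- _ => apply: np_neg; solve_neg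
  end.
Ltac side1 := first [ apply: pos_neq0; solve_pos | apply: neg_neq0; solve_neg ].
Ltac side2 := let H := fresh in intro H; ring_simplify in H; revert H;
  first [ apply: neg_neq0'; solve_neg | apply: pos_neq0'; solve_pos ].
Ltac side := repeat split; first [ side1 | side2 ].

Lemma poch_neg_neq0 (a : rat) m : a + m%:R < 0 -> poch a m.+1 != 0.
Proof.
elim: m => [|m IH] h.
  by rewrite pochS poch0 mul1r ltr0_neq0.
rewrite pochS mulf_neq0 //; last by rewrite ltr0_neq0.
apply: IH; apply: lt_trans h; by rewrite ltrD2l ltr_nat.
Qed.

Ltac nz := apply/eqP; match goal with |- ?e <> 0 => let e' := canon e in change (e' <> r0) end; side.

Definition Uf (n k : nat) : rat :=
  (-1)^+k * poch (-3*n%:R-3) k * poch (-2*n%:R-11/6) k * poch (1/2) k.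
Definition Vf (n k : nat) : rat :=
  (k`!)%:R * (poch (2*n%:R+4/3) k * poch (2*n%:R+4/3 + k%:R) 2)
  * (poch (3*n%:R+3/2) k * poch (3*n%:R+3/2+k%:R) 3).

Lemma E1 n k : term7 n.+1 k = (4*k%:R+1) * c1p n%:R * (Uf n k / Vf n k).
Proof.
have e1 : - (3 * n.+1)%:R = -3*n%:R-3 :> rat by rewrite natrM (natS n); rring.
have e2 : - (2 * n.+1)%:R + 1/6 = -2*n%:R-11/6 :> rat by rewrite natrM (natS n); rfield.
have e3 : (2 * n.+1)%:R + 4/3 = 2*n%:R+4/3 + 2%:R :> rat by rewrite natrM (natS n); rfield.
have e4 : (3 * n.+1)%:R + 3/2 = 3*n%:R+3/2 + 3%:R :> rat by rewrite natrM (natS n); rfield.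
rewrite /term7 e1 e2 e3 e4 (pochC (2*n%:R+4/3) 2); last first.
  by rewrite poch_neq0 // lin_gt0.
rewrite (pochC (3*n%:R+3/2) 3); last by rewrite poch_neq0 // lin_gt0.
rewrite /Uf /Vf /c1p.
rewrite !poch2 !poch3.
rfield; side.
Qed.

Lemma E2 n k : Cnp n%:R * term7 n k = (4*k%:R+1) * (Uf n k / Vf n k) * Qp n%:R k%:R.
Proof.
have e1 : - (3 * n)%:R = (-3*n%:R-3) + 3%:R :> rat by rewrite natrM; rring.
have e2 : - (2 * n)%:R + 1/6 = (-2*n%:R-11/6) + 2%:R :> rat by rewrite natrM; rfield.
have e3 : (2 * n)%:R + 4/3 = 2*n%:R+4/3 :> rat by rewrite natrM.
have e4 : (3 * n)%:R + 3/2 = 3*n%:R+3/2 :> rat by rewrite natrM.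
rewrite /term7 e1 e2 e3 e4 (pochC (-3*n%:R-3) 3); last first.
  apply: poch_neg_neq0; rewrite (_ : _ + _ = -(3*n%:R+1)); last by rfield.
  by rewrite oppr_lt0 lin_gt0.
rewrite (pochC (-2*n%:R-11/6) 2); last first.
  apply: poch_neg_neq0; rewrite (_ : _ + _ = -(2*n%:R+5/6)); last by rfield.
  by rewrite oppr_lt0 lin_gt0.
rewrite /Uf /Vf /Cnp /Qp !poch2 !poch3.
rfield; side.
Qed.

Lemma E3 n k : (Uf n k.+1 / Vf n k.+1) * ((k%:R+1)*((k%:R+1)+2*n%:R+7/3)*((k%:R+1)+3*n%:R+7/2))
  = - (Uf n k / Vf n k) * ((k%:R-3*n%:R-3)*(k%:R-2*n%:R-11/6)*(k%:R+1/2)).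
Proof.
rewrite /Uf /Vf !pochS ?poch0 exprSr factS natrM (natS k).
rfield; side.
Qed.

Definition Gf (n k : nat) : rat :=
  (Uf n k / Vf n k) * (k%:R*(k%:R+2*n%:R+7/3)*(k%:R+3*n%:R+7/2)) * Yp n%:R k%:R.

Lemma keyA (x z w t1 t0c w1 : rat) :
  t1 = (4*z+1) * c1p x * w ->
  t0c = (4*z+1) * w * Qp x z ->
  w1 * ((z+1)*((z+1)+2*x+7/3)*((z+1)+3*x+7/2)) = - w * ((z-3*x-3)*(z-2*x-11/6)*(z+1/2)) ->
  1440 * (P1p x * t1 - P0p x * t0c) =
  w1 * ((z+1)*((z+1)+2*x+7/3)*((z+1)+3*x+7/2)) * Yp x (z+1)
  - w * (z*(z+2*x+7/3)*(z+3*x+7/2)) * Yp x z.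
Proof. by move=> -> -> h3; rewrite h3; exact: key. Qed.

Lemma step n k : 1440 * (P1p n%:R * term7 n.+1 k - P0p n%:R * (Cnp n%:R * term7 n k))
  = Gf n k.+1 - Gf n k.
Proof.
rewrite /Gf (natS k).
exact: (@keyA _ _ _ _ _ _ (E1 n k) (E2 n k) (E3 n k)).
Qed.

Lemma zero3 (w a b y : rat) : w * (0 * a * b) * y = 0.
Proof. by rewrite !mul0r mulr0 mul0r. Qed.

Lemma zero4 (s b c v a y : rat) : s * 0 * b * c / v * a * y = 0.
Proof. by rewrite mulr0 !mul0r. Qed.

Lemma G0 n : Gf n 0 = 0.
Proof. exact: zero3. Qed.

Lemma GM n : Gf n (3 * n.+1).+1 = 0.
Proof.
rewrite /Gf /Uf (@poch_zero (-3*n%:R-3) (3 * n.+1) (3 * n.+1).+1) //; first exact: zero4.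
rewrite natrM (natS n); rring.
Qed.

Definition Sn (n : nat) : rat := \sum_(k < (3 * n).+1) term7 n k.

Lemma sum_lin (M : nat) (a b c d : rat) (f g : nat -> rat) :
  \sum_(k < M) a * (b * f k - c * (d * g k))
  = a * (b * \sum_(k < M) f k - c * (d * \sum_(k < M) g k)).
Proof. by rewrite -mulr_sumr sumrB -!mulr_sumr. Qed.

Lemma recS n : P1p n%:R * Sn n.+1 = P0p n%:R * (Cnp n%:R * Sn n).
Proof.
set M := (3 * n.+1).+1.
have tel := telescope_sumr (Gf n) (leq0n M).
rewrite big_mkord GM G0 subrr in tel.
have h : \sum_(k < M) 1440 * (P1p n%:R * term7 n.+1 k - P0p n%:R * (Cnp n%:R * term7 n k)) = 0.
  transitivity (\sum_(i < M) (Gf n i.+1 - Gf n i)); last exact: tel.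
  by apply: eq_bigr => i _; exact: step.
rewrite (sum_lin M 1440 (P1p n%:R) (P0p n%:R) (Cnp n%:R) (term7 n.+1) (term7 n)) in h.
rewrite (@sum_stable n M) in h; last by rewrite /M mulnS !ltnS leq_addl.
move/eqP: h; rewrite mulf_eq0 => /orP [h|h].
  exfalso; move: h; by rewrite pnatr_eq0.
by apply/eqP; rewrite -subr_eq0.
Qed.

Definition rr (c : rat) (n : nat) : rat :=
  (c ^+ n)
  * (poch (5/6 : rat) n * poch (1/2) n * poch (7/6) n ^+ 2)
  / (poch (7/15 : rat) n * poch (13/15) n * poch (16/15) n * poch (4/15) n).

Lemma P1_neq0 n : P1p n%:R != 0.
Proof. rewrite /P1p /Cnp; nz. Qed.

Lemma Sn_rr (c : rat) (hc : c = 108%:R / 3125%:R) n : Sn n = rr c n.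
Proof.
elim: n => [|n IH].
  rewrite /Sn /rr big_ord1 (_ : nat_of_ord (@ord0 0) = 0%nat); last by [].
  rewrite /term7 !poch0 fact0 !expr0 expr1n.
  rfield.
apply: (mulfI (P1_neq0 n)); apply: etrans (recS n) _.
rewrite IH /rr !pochS !exprSr ?expr0.
rewrite hc /P1p /P0p /Cnp.
rfield; side.
Qed.

Theorem theorem7 (n N : nat) (hN : (3 * n < N)%N) :
  \sum_(k < N) term7 n k =
  (((2 ^ 2 * 3 ^ 3)%:R / (5 ^ 5)%:R : rat) ^+ n)
  * (poch (5/6 : rat) n * poch (1/2) n * poch (7/6) n ^+ 2)
  / (poch (7/15 : rat) n * poch (13/15) n * poch (16/15) n * poch (4/15) n).
Proof.
rewrite (@sum_stable n N hN).
apply: (@Sn_rr ((2 ^ 2 * 3 ^ 3)%:R / (5 ^ 5)%:R : rat)).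
by [].
Qed.
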